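(* Let $\mathcal A\subset\mathbb R^d$ be a finite nonempty set, $\mathcal D=\mathrm{conv}(\mathcal A)$, and let $f$ be convex and differentiable on an open set containing the Minkowski set $\mathcal D+\mathcal D-\mathcal D=\{x+s-v: x,s,v\in\mathcal D\}$, with $C_f^{A}<\infty$. Run the away-steps Frank-Wolfe algorithm (AFW) described in the context, and let $h_t:=f(x^{(t)})-\min_{x\in\mathcal D}f(x)$. Then: (i) at every good step $t$ (i.e. $\gamma_t<\gamma_{\max}$) one has $h_{t+1}\le(1-\rho_f)h_t$ with $\rho_f:=\mu_f^{A}/(4C_f^{A})$, and $h_{t+1}\le h_t$ at every step; (ii) the number of drop steps (away steps with $\gamma_t=\gamma_{\max}$) among iterations $0,\dots,t-1$ is at most $t/2$; (iii) consequently $h_t\le h_0\exp(-\tfrac12\rho_f t)$ for all $t\ge 0$; (iv) if only $\mu_f^{A}\ge 0$ is known (general convex case), then $h_t\le \frac{4C}{k(t)+4}$ with $C=2C_f^{A}+h_0$, where $k(t)\ge t/2$ is the number of steps among iterations $0,\dots,t-1$ that are not drop steps.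
   Context: All norms and inner products are Euclidean. For $x\in\mathcal D$, let $\mathcal S_x$ be the family of subsets $S\subseteq\mathcal A$ such that $x$ is a proper convex combination of all elements of $S$ (i.e. $x=\sum_{v\in S}\alpha_v v$ with all $\alpha_v>0$, $\sum\alpha_v=1$). Curvature constant: $C_f^{A}:=\sup\{\frac{2}{\gamma^2}(f(y)-f(x)-\gamma\langle\nabla f(x),s-v\rangle): x,s,v\in\mathcal D,\ \gamma\in(0,1],\ y=x+\gamma(s-v)\}$. Geometric strong convexity: for $x\in\mathcal D$ let $s_f(x)\in\arg\min_{a\in\mathcal A}\langle\nabla f(x),a\rangle$; for $S\in\mathcal S_x$ let $v_S(x)\in\arg\max_{v\in S}\langle\nabla f(x),v\rangle$; let $v_f(x)$ be an element of $\{v_S(x):S\in\mathcal S_x\}$ minimizing $\langle\nabla f(x),\cdot\rangle$. For $x,x^*\in\mathcal D$ with $\langle\nabla f(x),x^*-x\rangle<0$ put $\gamma^{A}(x,x^* ):=\frac{\langle-\nabla f(x),x^*-x\rangle}{\langle-\nabla f(x),s_f(x)-v_f(x)\rangle}$, and $\mu_f^{A}:=\inf_{x\in\mathcal D}\inf_{x^*\in\mathcal D:\langle\nabla f(x),x^*-x\rangle<0}\frac{2}{\gamma^{A}(x,x^* )^2}\big(f(x^* )-f(x)-\langle\nabla f(x),x^*-x\rangle\big)$. AFW algorithm: start with $x^{(0)}\in\mathcal A$, $S^{(0)}=\{x^{(0)}\}$, weight $\alpha^{(0)}_{x^{(0)}}=1$. At iteration $t$, $x^{(t)}=\sum_{v\in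 S^{(t)}}\alpha^{(t)}_v v$ with $\alpha^{(t)}_v>0$ summing to 1. Let $s_t\in\arg\min_{a\in\mathcal A}\langle\nabla f(x^{(t)}),a\rangle$, $d^{FW}_t=s_t-x^{(t)}$, $v_t\in\arg\max_{v\in S^{(t)}}\langle\nabla f(x^{(t)}),v\rangle$, $d^{A}_t=x^{(t)}-v_t$. If $\langle-\nabla f(x^{(t)}),d^{FW}_t\rangle\ge\langle-\nabla f(x^{(t)}),d^{A}_t\rangle$ take $d_t=d^{FW}_t$, $\gamma_{\max}=1$ (FW step); otherwise $d_t=d^{A}_t$, $\gamma_{\max}=\alpha^{(t)}_{v_t}/(1-\alpha^{(t)}_{v_t})$ (away step). Let $\gamma_t\in\arg\min_{\gamma\in[0,\gamma_{\max}]}f(x^{(t)}+\gamma d_t)$ and $x^{(t+1)}=x^{(t)}+\gamma_t d_t$. Weights: for a FW step $\alpha^{(t+1)}_{s_t}=(1-\gamma_t)\alpha^{(t)}_{s_t}+\gamma_t$ and $\alpha^{(t+1)}_v=(1-\gamma_t)\alpha^{(t)}_v$ for $v\ne s_t$; for an away step $\alpha^{(t+1)}_{v_t}=(1+\gamma_t)\alpha^{(t)}_{v_t}-\gamma_t$ and $\alpha^{(t+1)}_v=(1+\gamma_t)\alpha^{(t)}_v$ for $v\neq v_t$ (weights of atoms not previously active are $0$). $S^{(t+1)}=\{v\in\mathcal A:\alpha^{(t+1)}_v>0\}$. A step is good if $\gamma_t<\gamma_{\max}$. *)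

(* Defs.v *)
(* classical real numbers.  Vectors of R^d are represented as
   functions nat -> R whose coordinates >= d vanish (predicate in_Rd). *)
From Stdlib Require Import Reals Lra Lia Arith.
Open Scope R_scope.

Definition vec := nat -> R.
Definition vadd (x y : vec) : vec := fun i => x i + y i.
Definition vsub (x y : vec) : vec := fun i => x i - y i.
Definition vscal (c : R) (x : vec) : vec := fun i => c * x i.

Fixpoint sumR (n : nat) (F : nat -> R) : R :=
  match n with O => 0 | S k => sumR k F + F k end.

Fixpoint countN (n : nat) (P : nat -> bool) : nat :=
  match n with O => O | S k => (countN k P + (if P k then 1 else 0))%nat end.

Definition in_Rd (d : nat) (x : vec) : Prop := forall i, (d <= i)%nat -> x i = 0.
Definition ip (d : nat) (x y : vec) : R := sumR d (fun i => x i * y i).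
Definition norm (d : nat) (x : vec) : R := sqrt (ip d x x).

(* The atom set A = {a 0, ..., a (m-1)} (distinct points of R^d). *)
Definition lincomb (m : nat) (lam : nat -> R) (a : nat -> vec) : vec :=
  fun j => sumR m (fun i => lam i * a i j).

Definition in_conv (m : nat) (a : nat -> vec) (x : vec) : Prop :=
  exists lam : nat -> R, (forall i, (i < m)%nat -> 0 <= lam i) /\
    sumR m lam = 1 /\ x = lincomb m lam a.

Definition in_mink (m : nat) (a : nat -> vec) (y : vec) : Prop :=
  exists x s v, in_conv m a x /\ in_conv m a s /\ in_conv m a v /\
    y = vadd x (vsub s v).

Definition is_open (d : nat) (U : vec -> Prop) : Prop :=
  forall x, U x -> in_Rd d x /\
    exists r, 0 < r /\ forall y, in_Rd d y -> norm d (vsub y x) < r -> U y.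

Definition has_grad (d : nat) (f : vec -> R) (x g : vec) : Prop :=
  in_Rd d g /\
  forall eps, 0 < eps -> exists delta, 0 < delta /\
    forall y, in_Rd d y -> norm d (vsub y x) < delta ->
      Rabs (f y - f x - ip d g (vsub y x)) <= eps * norm d (vsub y x).

Definition convex_on (U : vec -> Prop) (f : vec -> R) : Prop :=
  forall x y l, U x -> U y -> 0 <= l <= 1 ->
    U (vadd (vscal l x) (vscal (1 - l) y)) ->
    f (vadd (vscal l x) (vscal (1 - l) y)) <= l * f x + (1 - l) * f y.

Definition is_inf (E : R -> Prop) (c : R) : Prop :=
  (forall r, E r -> c <= r) /\ (forall b, (forall r, E r -> b <= r) -> b <= c).

(* elements of the set whose sup is C_f^A *)
Definition curv_set (d m : nat) (a : nat -> vec) (f : vec -> R) (grad : vec -> vec)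
  (r : R) : Prop :=
  exists x s v gam, in_conv m a x /\ in_conv m a s /\ in_conv m a v /\
    0 < gam <= 1 /\
    r = 2 / (gam ^ 2) *
        (f (vadd x (vscal gam (vsub s v))) - f x - gam * ip d (grad x) (vsub s v)).

(* S in S_x ; S is a subset of indices of atoms, given as a boolean predicate *)
Definition in_Sx (m : nat) (a : nat -> vec) (x : vec) (S : nat -> bool) : Prop :=
  (forall i, S i = true -> (i < m)%nat) /\
  exists lam : nat -> R,
    (forall i, (i < m)%nat -> (S i = true -> 0 < lam i) /\ (S i = false -> lam i = 0)) /\
    sumR m lam = 1 /\ x = lincomb m lam a.

(* sv is a possible value of s_f(x), where g = grad f (x) *)
Definition is_sf (d m : nat) (a : nat -> vec) (g sv : vec) : Prop :=
  exists i, (i < m)%nat /\ sv = a i /\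
    forall j, (j < m)%nat -> ip d g (a i) <= ip d g (a j).

Definition is_vS (d : nat) (a : nat -> vec) (g : vec) (S : nat -> bool) (vv : vec) : Prop :=
  exists i, S i = true /\ vv = a i /\
    forall j, S j = true -> ip d g (a j) <= ip d g (a i).

Definition is_vf (d m : nat) (a : nat -> vec) (x g vv : vec) : Prop :=
  exists S, in_Sx m a x S /\ is_vS d a g S vv /\
    forall S' w, in_Sx m a x S' -> is_vS d a g S' w -> ip d g vv <= ip d g w.

(* elements of the set whose inf is mu_f^A *)
Definition mu_set (d m : nat) (a : nat -> vec) (f : vec -> R) (grad : vec -> vec)
  (r : R) : Prop :=
  exists x xs sv vv, in_conv m a x /\ in_conv m a xs /\
    ip d (grad x) (vsub xs x) < 0 /\
    is_sf d m a (grad x) sv /\ is_vf d m a x (grad x) vv /\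
    let gamA := (- ip d (grad x) (vsub xs x)) / (- ip d (grad x) (vsub sv vv)) in
    r = 2 / (gamA ^ 2) * (f xs - f x - ip d (grad x) (vsub xs x)).

(* ---------- The AFW algorithm ----------
   x t : iterate, alpha t i : weight of atom a i, s t / v t : indices of the
   FW atom s_t and away atom v_t, gamma t : step size. *)

Definition is_fw (d : nat) (a : nat -> vec) (grad : vec -> vec) (x : nat -> vec)
  (s v : nat -> nat) (t : nat) : bool :=
  if Rge_dec (- ip d (grad (x t)) (vsub (a (s t)) (x t)))
             (- ip d (grad (x t)) (vsub (x t) (a (v t)))) then true else false.

Definition dirn (d : nat) (a : nat -> vec) (grad : vec -> vec) (x : nat -> vec)
  (s v : nat -> nat) (t : nat) : vec :=
  if is_fw d a grad x s v t then vsub (a (s t)) (x t) else vsub (x t) (a (v t)).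

Definition gmax (d : nat) (a : nat -> vec) (grad : vec -> vec) (x : nat -> vec)
  (alpha : nat -> nat -> R) (s v : nat -> nat) (t : nat) : R :=
  if is_fw d a grad x s v t then 1
  else alpha t (v t) / (1 - alpha t (v t)).

Definition AFW_run (d m : nat) (a : nat -> vec) (f : vec -> R) (grad : vec -> vec)
  (x : nat -> vec) (alpha : nat -> nat -> R) (s v : nat -> nat) (gamma : nat -> R)
  : Prop :=
  (exists i0, (i0 < m)%nat /\ x O = a i0 /\
     forall i, alpha O i = if Nat.eqb i i0 then 1 else 0) /\
  forall t,
    let g := grad (x t) in
    let dt := dirn d a grad x s v t in
    let gm := gmax d a grad x alpha s v t in
    ((s t < m)%nat /\ forall j, (j < m)%nat -> ip d g (a (s t)) <= ip d g (a j)) /\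
    ((v t < m)%nat /\ 0 < alpha t (v t) /\
       forall j, (j < m)%nat -> 0 < alpha t j -> ip d g (a j) <= ip d g (a (v t))) /\
    (0 <= gamma t <= gm /\
       forall gam, 0 <= gam <= gm ->
         f (vadd (x t) (vscal (gamma t) dt)) <= f (vadd (x t) (vscal gam dt))) /\
    x (S t) = vadd (x t) (vscal (gamma t) dt) /\
    (forall i, alpha (S t) i =
       if is_fw d a grad x s v t then
         (if Nat.eqb i (s t) then (1 - gamma t) * alpha t i + gamma t
          else (1 - gamma t) * alpha t i)
       else
         (if Nat.eqb i (v t) then (1 + gamma t) * alpha t i - gamma t
          else (1 + gamma t) * alpha t i)).

Definition is_drop (d : nat) (a : nat -> vec) (grad : vec -> vec) (x : nat -> vec)
  (alpha : nat -> nat -> R) (s v : nat -> nat) (gamma : nat -> R) (t : nat) : bool :=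
  negb (is_fw d a grad x s v t) &&
  (if Req_EM_T (gamma t) (gmax d a grad x alpha s v t) then true else false).

(* Main.v *)
Require Import Defs.
From Stdlib Require Import Reals.
From Stdlib Require Import Lra Lia Arith FunctionalExtensionality Classical.
Open Scope R_scope.


Lemma sumR_ext n F G : (forall i, (i < n)%nat -> F i = G i) -> sumR n F = sumR n G.
Proof. induction n; simpl; intros H; auto. rewrite IHn by (intros; apply H; lia). rewrite H by lia. auto. Qed.

Lemma sumR_plus n F G : sumR n (fun i => F i + G i) = sumR n F + sumR n G.
Proof. induction n; simpl; [lra|]. rewrite IHn; lra. Qed.

Lemma sumR_scal n c F : sumR n (fun i => c * F i) = c * sumR n F.
Proof. induction n; simpl; [lra|]. rewrite IHn; lra. Qed.

Lemma sumR_minus n F G : sumR n (fun i => F i - G i) = sumR n F - sumR n G.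
Proof. induction n; simpl; [lra|]. rewrite IHn; lra. Qed.

Lemma sumR_le n F G : (forall i, (i < n)%nat -> F i <= G i) -> sumR n F <= sumR n G.
Proof. induction n; simpl; intros H; [lra|]. assert (F n <= G n) by (apply H; lia).
  assert (sumR n F <= sumR n G) by (apply IHn; intros; apply H; lia). lra. Qed.

Lemma sumR_zero n F : (forall i, (i < n)%nat -> F i = 0) -> sumR n F = 0.
Proof. induction n; simpl; intros H; [lra|]. rewrite IHn, H by (try intros; try apply H; lia). lra. Qed.

Lemma sumR_one n j F : (j < n)%nat -> sumR n (fun i => if Nat.eqb i j then F i else 0) = F j.
Proof. induction n; simpl; intros H; [lia|].
  destruct (Nat.eqb n j) eqn:E.
  - apply Nat.eqb_eq in E; subst. rewrite sumR_zero. lra.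
    intros i Hi. destruct (Nat.eqb i j) eqn:E2; auto. apply Nat.eqb_eq in E2; lia.
  - apply Nat.eqb_neq in E. rewrite IHn by lia. lra. Qed.

Lemma sumR_ind n j F : (j < n)%nat -> sumR n (fun i => (if Nat.eqb i j then 1 else 0) * F i) = F j.
Proof. intros H. rewrite <- (sumR_one n j F H). apply sumR_ext. intros i _.
  destruct (Nat.eqb i j); lra. Qed.

Lemma sumR_ind' n j F : (j < n)%nat -> sumR n (fun i => F i * (if Nat.eqb i j then 1 else 0)) = F j.
Proof. intros H. rewrite <- (sumR_one n j F H). apply sumR_ext. intros i _.
  destruct (Nat.eqb i j); lra. Qed.

Lemma sumR_swap n m F : sumR n (fun i => sumR m (fun j => F i j)) = sumR m (fun j => sumR n (fun i => F i j)).
Proof. induction n; simpl.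
  - symmetry. apply sumR_zero. auto.
  - rewrite IHn. rewrite <- sumR_plus. auto. Qed.

Lemma sumR_ge0 n F : (forall i, (i < n)%nat -> 0 <= F i) -> 0 <= sumR n F.
Proof. intros H. rewrite <- (sumR_zero n (fun _ => 0)) by auto. apply sumR_le. auto. Qed.

Lemma sumR_single_le n j F : (j < n)%nat -> (forall i, (i < n)%nat -> 0 <= F i) -> F j <= sumR n F.
Proof. intros Hj H. rewrite <- (sumR_one n j F Hj). apply sumR_le. intros i Hi.
  destruct (Nat.eqb i j); auto. lra. Qed.

Lemma sumR_two_le n i j F : (i < n)%nat -> (j < n)%nat -> i <> j ->
  (forall k, (k < n)%nat -> 0 <= F k) -> F i + F j <= sumR n F.
Proof. intros Hi Hj Hij H.
  assert (E: sumR n F = sumR n (fun k => if Nat.eqb k j then F k else 0) +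
                        sumR n (fun k => if Nat.eqb k j then 0 else F k)).
  { rewrite <- sumR_plus. apply sumR_ext. intros k _. destruct (Nat.eqb k j); lra. }
  rewrite E, sumR_one by auto.
  assert (F i <= sumR n (fun k => if Nat.eqb k j then 0 else F k)).
  { replace (F i) with ((fun k => if Nat.eqb k j then 0 else F k) i).
    apply (sumR_single_le n i (fun k => if Nat.eqb k j then 0 else F k)); auto. intros k Hk; destruct (Nat.eqb k j); auto; lra.
    simpl. destruct (Nat.eqb i j) eqn:E2; auto. apply Nat.eqb_eq in E2; lia. }
  lra. Qed.

Lemma ip_vsub d g x y : ip d g (vsub x y) = ip d g x - ip d g y.
Proof. unfold ip, vsub. rewrite <- sumR_minus. apply sumR_ext; intros; ring. Qed.
Lemma ip_vadd d g x y : ip d g (vadd x y) = ip d g x + ip d g y.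
Proof. unfold ip, vadd. rewrite <- sumR_plus. apply sumR_ext; intros; ring. Qed.
Lemma ip_vscal d g c x : ip d g (vscal c x) = c * ip d g x.
Proof. unfold ip, vscal. rewrite <- sumR_scal. apply sumR_ext; intros; ring. Qed.
Lemma ip_vscal_l d g c x : ip d (vscal c g) x = c * ip d g x.
Proof. unfold ip, vscal. rewrite <- sumR_scal. apply sumR_ext; intros; ring. Qed.
Lemma ip_lincomb d g m lam a : ip d g (lincomb m lam a) = sumR m (fun i => lam i * ip d g (a i)).
Proof. unfold ip, lincomb.
  transitivity (sumR d (fun j => sumR m (fun i => lam i * (g j * a i j)))).
  { apply sumR_ext; intros. rewrite <- sumR_scal. apply sumR_ext; intros; ring. }
  rewrite sumR_swap. apply sumR_ext; intros. rewrite <- sumR_scal. auto. Qed.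
Lemma ip_self_ge0 d x : 0 <= ip d x x.
Proof. apply sumR_ge0. intros. apply Rle_0_sqr. Qed.

Lemma norm_vscal d c x : norm d (vscal c x) = Rabs c * norm d x.
Proof. unfold norm. rewrite ip_vscal, ip_vscal_l. rewrite <- Rmult_assoc.
  rewrite sqrt_mult_alt by apply Rle_0_sqr. rewrite <- sqrt_Rsqr_abs. auto. Qed.
Lemma norm_ge0 d x : 0 <= norm d x.
Proof. apply sqrt_pos. Qed.

Lemma conv_atom m a k : (k < m)%nat -> in_conv m a (a k).
Proof. intros Hk. exists (fun i => if Nat.eqb i k then 1 else 0). repeat split.
  - intros i _. destruct (Nat.eqb i k); lra.
  - apply (sumR_one m k (fun _ => 1) Hk).
  - extensionality j. unfold lincomb. rewrite sumR_ind by auto. auto. Qed.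

Lemma conv_comb m a p q l : in_conv m a p -> in_conv m a q -> 0 <= l <= 1 ->
  in_conv m a (vadd (vscal l p) (vscal (1 - l) q)).
Proof. intros [lp [Hp1 [Hp2 Hp3]]] [lq [Hq1 [Hq2 Hq3]]] Hl.
  exists (fun i => l * lp i + (1 - l) * lq i). repeat split.
  - intros i Hi. specialize (Hp1 i Hi). specialize (Hq1 i Hi). nra.
  - rewrite sumR_plus, !sumR_scal, Hp2, Hq2. ring.
  - subst. extensionality j. unfold vadd, vscal, lincomb.
    rewrite <- !sumR_scal, <- sumR_plus. apply sumR_ext; intros; ring. Qed.

Lemma lincomb_Rd d m a lam : (forall i, (i < m)%nat -> in_Rd d (a i)) -> in_Rd d (lincomb m lam a).
Proof. intros Ha j Hj. unfold lincomb. apply sumR_zero. intros i Hi. rewrite (Ha i Hi j Hj). ring. Qed.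

Lemma conv_Rd d m a x : (forall i, (i < m)%nat -> in_Rd d (a i)) -> in_conv m a x -> in_Rd d x.
Proof. intros Ha [l [_ [_ ->]]]. apply lincomb_Rd; auto. Qed.

Lemma mink_step m a x s v gam : in_conv m a x -> in_conv m a s -> in_conv m a v -> 0 <= gam <= 1 ->
  in_mink m a (vadd x (vscal gam (vsub s v))).
Proof. intros Hx Hs Hv Hg. exists x, (vadd (vscal gam s) (vscal (1 - gam) v)), v.
  repeat split; auto. apply conv_comb; auto.
  extensionality j. unfold vadd, vscal, vsub. ring. Qed.

Lemma conv_mink m a x : in_conv m a x -> in_mink m a x.
Proof. intros H. exists x, x, x. repeat split; auto. extensionality j. unfold vadd, vsub. ring. Qed.

Lemma lam_ip_le d m a g lam c : (forall i, (i < m)%nat -> 0 <= lam i) -> sumR m lam = 1 ->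
  (forall i, (i < m)%nat -> 0 < lam i -> ip d g (a i) <= c) -> ip d g (lincomb m lam a) <= c.
Proof. intros H1 H2 H3. rewrite ip_lincomb.
  replace c with (sumR m (fun i => lam i * c)) by (rewrite (sumR_ext m _ (fun i => c * lam i)) by (intros; ring);
    rewrite sumR_scal, H2; ring).
  apply sumR_le. intros i Hi. destruct (H1 i Hi) as [Hl|Hl].
  - apply Rmult_le_compat_l; auto; lra.
  - rewrite <- Hl. lra. Qed.

Lemma lam_ip_ge d m a g lam c : (forall i, (i < m)%nat -> 0 <= lam i) -> sumR m lam = 1 ->
  (forall i, (i < m)%nat -> 0 < lam i -> c <= ip d g (a i)) -> c <= ip d g (lincomb m lam a).
Proof. intros H1 H2 H3. rewrite ip_lincomb.
  replace c with (sumR m (fun i => lam i * c)) by (rewrite (sumR_ext m _ (fun i => c * lam i)) by (intros; ring);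
    rewrite sumR_scal, H2; ring).
  apply sumR_le. intros i Hi. destruct (H1 i Hi) as [Hl|Hl].
  - apply Rmult_le_compat_l; auto; lra.
  - rewrite <- Hl. lra. Qed.

Lemma conv_ip_ge d m a g x c : in_conv m a x -> (forall i, (i < m)%nat -> c <= ip d g (a i)) ->
  c <= ip d g x.
Proof. intros [l [H1 [H2 ->]]] H. apply lam_ip_ge; auto. Qed.

Lemma conv_ip_le d m a g x c : in_conv m a x -> (forall i, (i < m)%nat -> ip d g (a i) <= c) ->
  ip d g x <= c.
Proof. intros [l [H1 [H2 ->]]] H. apply lam_ip_le; auto. Qed.

Lemma Rabs_le_inv' u b : Rabs u <= b -> - b <= u.
Proof. intros H. pose proof (Rle_abs (- u)). rewrite Rabs_Ropp in H0. lra. Qed.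

Lemma first_order d m a f grad U x y
  (Ha : forall i, (i < m)%nat -> in_Rd d (a i))
  (HUmink : forall y, in_mink m a y -> U y)
  (Hgrad : forall y, U y -> has_grad d f y (grad y))
  (Hconv : convex_on U f) :
  in_conv m a x -> in_conv m a y -> f x + ip d (grad x) (vsub y x) <= f y.
Proof. intros Hx Hy.
  set (N := norm d (vsub y x)). set (I := ip d (grad x) (vsub y x)).
  assert (HN : 0 <= N) by apply norm_ge0.
  destruct (Rle_dec (f x + I) (f y)) as [ok|nok]; auto. exfalso.
  set (d0 := f x + I - f y). assert (Hd0 : 0 < d0) by (unfold d0; lra).
  set (eps := d0 / (2 * (N + 1))).
  assert (Heps : 0 < eps) by (unfold eps; apply Rdiv_lt_0_compat; lra).
  destruct (Hgrad x (HUmink x (conv_mink m a x Hx))) as [_ Hg].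
  destruct (Hg eps Heps) as [del [Hdel Hdel2]].
  set (l := del / (del + N + 1)).
  assert (Hl : 0 < l) by (unfold l; apply Rdiv_lt_0_compat; lra).
  assert (Hl2 : l * (del + N + 1) = del) by (unfold l; field; lra).
  assert (Hl1 : l < 1) by nra.
  set (z := vadd (vscal l y) (vscal (1 - l) x)).
  assert (Hz : in_conv m a z) by (apply conv_comb; auto; lra).
  assert (Hzx : vsub z x = vscal l (vsub y x)) by (extensionality j; unfold z, vsub, vadd, vscal; ring).
  assert (Hc : f z <= l * f y + (1 - l) * f x).
  { apply Hconv; try apply HUmink, conv_mink; auto. lra. }
  assert (Hnorm : norm d (vsub z x) = l * N) by (rewrite Hzx, norm_vscal, Rabs_pos_eq; unfold N; lra).
  specialize (Hdel2 z (conv_Rd d m a z Ha Hz)). rewrite Hnorm in Hdel2.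
  assert (Hlt : l * N < del) by nra.
  specialize (Hdel2 Hlt). rewrite Hzx, ip_vscal in Hdel2. fold I in Hdel2.
  apply Rabs_le_inv' in Hdel2. rename Hdel2 into Hd1.
  assert (H3 : l * (f y - f x - I + eps * N) >= 0) by nra.
  assert (H4 : f y - f x - I + eps * N >= 0).
  { destruct (Rlt_le_dec (f y - f x - I + eps * N) 0); auto; try lra. nra. }
  assert (H5 : eps * N < d0).
  { unfold eps. unfold Rdiv. assert (0 < / (2 * (N+1))) by (apply Rinv_0_lt_compat; lra).
    assert (d0 * / (2 * (N + 1)) * (2 * (N + 1)) = d0) by (field; lra). nra. }
  unfold d0 in H5. lra. Qed.

Lemma countN_le n P : (countN n P <= n)%nat.
Proof. induction n; simpl; auto. destruct (P n); lia. Qed.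

Lemma countN_mono n P Q : (forall i, (i < n)%nat -> P i = true -> Q i = true) ->
  (countN n P <= countN n Q)%nat.
Proof. induction n; simpl; intros H; auto.
  assert (IH := IHn (fun i Hi => H i ltac:(lia))).
  destruct (P n) eqn:E; [rewrite (H n ltac:(lia) E)|destruct (Q n)]; lia. Qed.

Lemma countN_plus1 n P Q j : (forall i, (i < n)%nat -> P i = true -> Q i = true \/ i = j) ->
  (countN n P <= countN n Q + 1)%nat.
Proof. intros H.
  assert (A : forall k, (k <= n)%nat -> (countN k P <= countN k Q + (if Nat.ltb j k then 1 else 0))%nat).
  { induction k; simpl; intros Hk; auto.
    assert (IH := IHk ltac:(lia)). revert IH.
    destruct (Nat.ltb_spec j k); destruct (Nat.ltb_spec j (S k)); try lia; intros IH.
    - destruct (P k) eqn:E; destruct (Q k) eqn:E2; try lia.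
      destruct (H k ltac:(lia) E); [congruence|lia].
    - assert (j = k) by lia. subst k.
      destruct (P j); destruct (Q j); lia.
    - destruct (P k) eqn:E; destruct (Q k) eqn:E2; try lia.
      destruct (H k ltac:(lia) E); [congruence|lia]. }
  specialize (A n (le_n n)). destruct (Nat.ltb j n); lia. Qed.

Lemma countN_strict n P Q j : (forall i, (i < n)%nat -> P i = true -> Q i = true) ->
  (j < n)%nat -> Q j = true -> P j = false -> (countN n P + 1 <= countN n Q)%nat.
Proof. induction n; simpl; intros H Hj HQ HP; [lia|].
  destruct (Nat.eq_dec j n).
  - subst. rewrite HQ, HP.
    assert (countN n P <= countN n Q)%nat by (apply countN_mono; intros; apply H; auto; lia). lia.
  - assert (IH := IHn (fun i Hi => H i ltac:(lia)) ltac:(lia) HQ HP).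
    destruct (P n) eqn:E; [rewrite (H n ltac:(lia) E)|destruct (Q n)]; lia. Qed.

Lemma countN_disj n P Q : (forall i, (i < n)%nat -> P i = true -> Q i = false) ->
  (countN n P + countN n Q <= n)%nat.
Proof. induction n; simpl; intros H; auto.
  assert (IH := IHn (fun i Hi => H i ltac:(lia))).
  destruct (P n) eqn:E; [rewrite (H n ltac:(lia) E)|destruct (Q n)]; lia. Qed.

Lemma countN_pos n P j : (j < n)%nat -> P j = true -> (1 <= countN n P)%nat.
Proof. intros Hj HP. assert (countN n (fun i => Nat.eqb i j) <= countN n P)%nat.
  { apply countN_mono. intros i _ E. apply Nat.eqb_eq in E. subst. auto. }
  assert (1 <= countN n (fun i => Nat.eqb i j))%nat.
  { clear H. induction n; simpl; [lia|]. destruct (Nat.eq_dec j n).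
    - subst. rewrite Nat.eqb_refl. lia.
    - specialize (IHn ltac:(lia)). lia. }
  lia. Qed.

Definition INV (m : nat) (a : nat -> vec) (x : nat -> vec) (alpha : nat -> nat -> R) (t : nat) : Prop :=
  (forall i, (m <= i)%nat -> alpha t i = 0) /\ (forall i, (i < m)%nat -> 0 <= alpha t i) /\
  sumR m (alpha t) = 1 /\ x t = lincomb m (alpha t) a.

Ltac run_at H t :=
  let Ht := fresh "Ht" in pose proof (proj2 H t) as Ht; cbv zeta in Ht;
  destruct Ht as [[Hs1 Hs2] [[Hv1 [Hv2 Hv3]] [[Hg1 Hg2] [Hx Hal]]]].

Lemma inv_generic m a (xt xt1 : vec) (al al1 : nat -> R) c1 c2 j :
  (j < m)%nat -> (forall i, (m <= i)%nat -> al i = 0) -> sumR m al = 1 -> xt = lincomb m al a ->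
  (forall i, al1 i = c1 * al i + c2 * (if Nat.eqb i j then 1 else 0)) -> c1 + c2 = 1 ->
  (forall k, xt1 k = c1 * xt k + c2 * a j k) ->
  (forall i, (m <= i)%nat -> al1 i = 0) /\ sumR m al1 = 1 /\ xt1 = lincomb m al1 a.
Proof. intros Hj H0 H1 H2 H3 H4 H5. repeat split.
  - intros i Hi. rewrite H3, H0 by auto. destruct (Nat.eqb_spec i j); [lia|ring].
  - rewrite (sumR_ext m _ (fun i => c1 * al i + c2 * (if Nat.eqb i j then 1 else 0)))
      by (intros; apply H3).
    rewrite sumR_plus, !sumR_scal, H1. rewrite (sumR_one m j (fun _ => 1) Hj). lra.
  - extensionality k. rewrite H5, H2. unfold lincomb.
    rewrite (sumR_ext m (fun i => al1 i * a i k)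
       (fun i => c1 * (al i * a i k) + c2 * ((if Nat.eqb i j then 1 else 0) * a i k)))
      by (intros; rewrite H3; ring).
    rewrite sumR_plus, !sumR_scal, sumR_ind by auto. ring. Qed.

Lemma inv_D m a x alpha t : INV m a x alpha t -> in_conv m a (x t).
Proof. intros [_ [H1 [H2 H3]]]. exists (alpha t). auto. Qed.

Lemma gFW_ge0 d m a f grad x alpha s v gamma t
  (Hrun : AFW_run d m a f grad x alpha s v gamma) : INV m a x alpha t ->
  0 <= - ip d (grad (x t)) (vsub (a (s t)) (x t)).
Proof. intros HI. run_at Hrun t. rewrite ip_vsub.
  assert (ip d (grad (x t)) (a (s t)) <= ip d (grad (x t)) (x t)).
  { apply conv_ip_ge with m a; auto. apply inv_D with alpha; auto. }
  lra. Qed.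

Lemma away_alpha d m a f grad x alpha s v gamma t
  (Hrun : AFW_run d m a f grad x alpha s v gamma) : INV m a x alpha t ->
  is_fw d a grad x s v t = false -> 0 < alpha t (v t) < 1.
Proof. intros HI Efw. pose proof (gFW_ge0 _ _ _ _ _ _ _ _ _ _ t Hrun HI) as HF.
  destruct HI as [H0 [H1 [H2 H3]]]. run_at Hrun t. split; auto.
  assert (Hle : alpha t (v t) <= 1) by (rewrite <- H2; apply sumR_single_le; auto).
  destruct Hle as [|Heq]; auto. exfalso.
  assert (Hal1 : forall i, (i < m)%nat -> alpha t i = if Nat.eqb i (v t) then 1 else 0).
  { intros i Hi. destruct (Nat.eqb_spec i (v t)); [subst; auto|].
    pose proof (sumR_two_le m i (v t) (alpha t) Hi Hv1 n H1). pose proof (H1 i Hi). lra. }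
  assert (Hxv : x t = a (v t)).
  { rewrite H3. extensionality k. unfold lincomb.
    rewrite (sumR_ext m _ (fun i => (if Nat.eqb i (v t) then 1 else 0) * a i k))
      by (intros; rewrite Hal1; auto). apply (sumR_ind m (v t) (fun i => a i k)); auto. }
  unfold is_fw in Efw. destruct (Rge_dec _ _) as [|Hn]; [discriminate|].
  apply Hn.
  assert (E : vsub (x t) (a (v t)) = fun _ => 0) by (rewrite Hxv; extensionality k; unfold vsub; ring).
  rewrite E. unfold ip at 2. rewrite sumR_zero by (intros; ring). lra. Qed.

Lemma inv_all d m a f grad x alpha s v gamma
  (Hrun : AFW_run d m a f grad x alpha s v gamma) : forall t, INV m a x alpha t.
Proof. induction t.
  - destruct (proj1 Hrun) as [i0 [Hi0 [Hx0 Hal0]]]. repeat split.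
    + intros i Hi. rewrite Hal0. destruct (Nat.eqb_spec i i0); [lia|auto].
    + intros i Hi. rewrite Hal0. destruct (Nat.eqb i i0); lra.
    + rewrite (sumR_ext m _ (fun i => if Nat.eqb i i0 then (fun _ => 1) i else 0))
        by (intros; rewrite Hal0; auto). apply sumR_one; auto.
    + rewrite Hx0. extensionality k. unfold lincomb.
      rewrite (sumR_ext m _ (fun i => (if Nat.eqb i i0 then 1 else 0) * a i k))
        by (intros; rewrite Hal0; auto). symmetry. apply (sumR_ind m i0 (fun i => a i k)); auto.
  - pose proof IHt as HI. destruct IHt as [H0 [H1 [H2 H3]]]. run_at Hrun t.
    unfold dirn, gmax in *. destruct (is_fw d a grad x s v t) eqn:Efw.
    + destruct (inv_generic m a (x t) (x (S t)) (alpha t) (alpha (S t)) (1 - gamma t) (gamma t) (s t))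
        as [K1 [K2 K3]]; auto.
      * intros i. rewrite Hal. destruct (Nat.eqb i (s t)); ring.
      * ring.
      * intros k. rewrite Hx. unfold vadd, vscal, vsub. ring.
      * repeat split; auto. intros i Hi. rewrite Hal. pose proof (H1 i Hi).
        destruct (Nat.eqb i (s t)); nra.
    + pose proof (away_alpha _ _ _ _ _ _ _ _ _ _ t Hrun HI Efw) as [Ha1 Ha2].
      destruct (inv_generic m a (x t) (x (S t)) (alpha t) (alpha (S t)) (1 + gamma t) (- gamma t) (v t))
        as [K1 [K2 K3]]; auto.
      * intros i. rewrite Hal. destruct (Nat.eqb i (v t)); ring.
      * ring.
      * intros k. rewrite Hx. unfold vadd, vscal, vsub. ring.
      * repeat split; auto. intros i Hi. rewrite Hal. pose proof (H1 i Hi).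
        destruct (Nat.eqb_spec i (v t)); [|nra]. subst i.
        assert (gamma t * (1 - alpha t (v t)) <= alpha t (v t)).
        { destruct Hg1 as [_ Hg1]. unfold Rdiv in Hg1.
          assert (alpha t (v t) * / (1 - alpha t (v t)) * (1 - alpha t (v t)) = alpha t (v t))
            by (field; lra). nra. }
        nra. Qed.

Definition supp m (alpha : nat -> nat -> R) t :=
  countN m (fun i => if Rlt_dec 0 (alpha t i) then true else false).

Lemma drop_iff d a grad x alpha s v gamma t :
  is_drop d a grad x alpha s v gamma t = true <->
  is_fw d a grad x s v t = false /\ gamma t = gmax d a grad x alpha s v t.
Proof. unfold is_drop. destruct (is_fw d a grad x s v t); simpl.
  - split; [discriminate|intros [H _]; discriminate].
  - destruct (Req_EM_T _ _); split; auto; try discriminate. intros [_ H]; contradiction. Qed.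

Lemma supp_step d m a f grad x alpha s v gamma t
  (Hrun : AFW_run d m a f grad x alpha s v gamma) :
  (is_fw d a grad x s v t = true -> (supp m alpha (S t) <= supp m alpha t + 1)%nat) /\
  (is_fw d a grad x s v t = false -> (supp m alpha (S t) <= supp m alpha t)%nat) /\
  (is_drop d a grad x alpha s v gamma t = true -> (supp m alpha (S t) + 1 <= supp m alpha t)%nat).
Proof. pose proof (inv_all _ _ _ _ _ _ _ _ _ _ Hrun t) as HI.
  pose proof HI as [H0 [H1 [H2 H3]]]. run_at Hrun t. unfold supp.
  assert (AW : is_fw d a grad x s v t = false -> forall i, (i < m)%nat ->
     (if Rlt_dec 0 (alpha (S t) i) then true else false) = true ->
     (if Rlt_dec 0 (alpha t i) then true else false) = true).
  { intros Efw i Hi. rewrite Hal, Efw. pose proof (H1 i Hi).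
    destruct (Nat.eqb_spec i (v t)).
    - subst. destruct (Rlt_dec 0 (alpha t (v t))); auto; lra.
    - destruct (Rlt_dec 0 (alpha t i)); auto.
      destruct (Rlt_dec 0 _); auto. destruct Hg1. nra. }
  split; [|split].
  - intros Efw. apply countN_plus1 with (s t). intros i Hi. rewrite Hal, Efw. pose proof (H1 i Hi).
    destruct (Nat.eqb_spec i (s t)); auto.
    destruct (Rlt_dec 0 (alpha t i)); auto.
    destruct (Rlt_dec 0 _); auto. unfold gmax in Hg1. rewrite Efw in Hg1. nra.
  - intros Efw. apply countN_mono. apply AW. auto.
  - intros Ed. apply drop_iff in Ed as [Efw Eg].
    apply countN_strict with (v t); auto.
    + destruct (Rlt_dec 0 (alpha t (v t))); auto; lra.
    + rewrite Hal, Efw, Nat.eqb_refl.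
      pose proof (away_alpha _ _ _ _ _ _ _ _ _ _ t Hrun HI Efw).
      unfold gmax in Eg. rewrite Efw in Eg. rewrite Eg.
      destruct (Rlt_dec 0 _) as [Hc|]; auto. exfalso.
      assert ((1 + alpha t (v t) / (1 - alpha t (v t))) * alpha t (v t) - alpha t (v t) / (1 - alpha t (v t)) = 0)
        by (field; lra). lra. Qed.

Lemma supp_ge1 d m a f grad x alpha s v gamma t
  (Hrun : AFW_run d m a f grad x alpha s v gamma) : (1 <= supp m alpha t)%nat.
Proof. run_at Hrun t. apply countN_pos with (v t); auto.
  destruct (Rlt_dec 0 _); auto. Qed.

Lemma count_main d m a f grad x alpha s v gamma
  (Hrun : AFW_run d m a f grad x alpha s v gamma) : forall t,
  (supp m alpha t + countN t (is_drop d a grad x alpha s v gamma) <=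
   1 + countN t (is_fw d a grad x s v))%nat.
Proof. induction t; simpl.
  - destruct (proj1 Hrun) as [i0 [Hi0 [Hx0 Hal0]]].
    assert (supp m alpha 0 <= countN m (fun _ => false) + 1)%nat.
    { apply countN_plus1 with i0. intros i _. rewrite Hal0.
      destruct (Nat.eqb_spec i i0); auto. destruct (Rlt_dec 0 0); [lra|discriminate]. }
    assert (countN m (fun _ => false) = 0)%nat by (clear; induction m; simpl; lia). lia.
  - destruct (supp_step _ _ _ _ _ _ _ _ _ _ t Hrun) as [A [B C]].
    destruct (is_fw d a grad x s v t) eqn:Efw.
    + assert (is_drop d a grad x alpha s v gamma t = false).
      { destruct (is_drop _ _ _ _ _ _ _ _ t) eqn:E; auto. apply drop_iff in E as [E _]. congruence. }
      rewrite H. specialize (A eq_refl). lia.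
    + destruct (is_drop d a grad x alpha s v gamma t) eqn:Ed.
      * specialize (C eq_refl). lia.
      * specialize (B eq_refl). lia. Qed.

Lemma drops_half d m a f grad x alpha s v gamma
  (Hrun : AFW_run d m a f grad x alpha s v gamma) : forall t,
  (2 * countN t (is_drop d a grad x alpha s v gamma) <= t)%nat.
Proof. intros t. pose proof (count_main _ _ _ _ _ _ _ _ _ _ Hrun t).
  pose proof (supp_ge1 _ _ _ _ _ _ _ _ _ _ t Hrun).
  assert (countN t (is_drop d a grad x alpha s v gamma) + countN t (is_fw d a grad x s v) <= t)%nat.
  { apply countN_disj. intros i _ E. apply drop_iff in E. tauto. }
  lia. Qed.

Lemma vadd_scal0 x y : vadd x (vscal 0 y) = x.
Proof. extensionality k. unfold vadd, vscal. ring. Qed.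

Lemma h_mono d m a f grad x alpha s v gamma t
  (Hrun : AFW_run d m a f grad x alpha s v gamma) : f (x (S t)) <= f (x t).
Proof. run_at Hrun t. rewrite Hx. rewrite <- (vadd_scal0 (x t) (dirn d a grad x s v t)) at 2.
  apply Hg2. lra. Qed.

Lemma line_opt d m a f grad U x alpha s v gamma t
  (HUmink : forall y, in_mink m a y -> U y) (Hconv : convex_on U f)
  (Hrun : AFW_run d m a f grad x alpha s v gamma) :
  is_drop d a grad x alpha s v gamma t = false ->
  forall gam, 0 <= gam <= 1 ->
  f (x (S t)) <= f (vadd (x t) (vscal gam (dirn d a grad x s v t))).
Proof. intros Ed gam Hgam. pose proof (inv_all _ _ _ _ _ _ _ _ _ _ Hrun t) as HI.
  run_at Hrun t. rewrite Hx.
  destruct (is_fw d a grad x s v t) eqn:Efw.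
  - apply Hg2. unfold gmax. rewrite Efw. lra.
  - assert (Hlt : gamma t < gmax d a grad x alpha s v t).
    { destruct Hg1 as [_ [Hl|He]]; auto. exfalso.
      assert (is_drop d a grad x alpha s v gamma t = true) by (apply drop_iff; auto). congruence. }
    destruct (Rle_dec gam (gmax d a grad x alpha s v t)) as [Hle|Hgt].
    + apply Hg2. lra.
    + set (G := gmax d a grad x alpha s v t) in *.
      set (dd := dirn d a grad x s v t).
      assert (Hdd : dd = vsub (x t) (a (v t))) by (unfold dd, dirn; rewrite Efw; auto).
      set (P := fun c => vadd (x t) (vscal c dd)).
      assert (HP : forall c, 0 <= c <= 1 -> U (P c)).
      { intros c Hc. unfold P. rewrite Hdd. apply HUmink. apply mink_step; auto.
        apply inv_D with alpha; auto. apply inv_D with alpha; auto. apply conv_atom; auto. }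
      set (l := (gam - G) / (gam - gamma t)).
      assert (Hl1 : l * (gam - gamma t) = gam - G) by (unfold l; field; lra).
      assert (Hl0 : 0 < l) by (unfold l; apply Rdiv_lt_0_compat; lra).
      assert (Hpos : gam - gamma t > 0) by lra.
      assert (Hl2 : l < 1).
      { apply Rnot_le_lt. intro. assert (l * (gam - gamma t) >= 1 * (gam - gamma t)) by nra. lra. }
      assert (Hcomb : vadd (vscal l (P (gamma t))) (vscal (1 - l) (P gam)) = P G).
      { unfold P. extensionality k. unfold vadd, vscal.
        replace G with (l * gamma t + (1 - l) * gam) by lra. ring. }
      assert (U1 : U (P (gamma t))) by (apply HP; lra).
      assert (U2 : U (P gam)) by (apply HP; lra).
      assert (U3 : U (P G)) by (apply HP; lra).
      assert (Hc := Hconv (P (gamma t)) (P gam) l U1 U2 ltac:(lra)).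
      rewrite Hcomb in Hc. specialize (Hc U3).
      assert (f (P (gamma t)) <= f (P G)) by (apply Hg2; lra).
      change (f (P (gamma t)) <= f (P gam)). nra. Qed.

Lemma curv_bound d m a f grad Cf xx ss vv gam
  (HCf : is_lub (curv_set d m a f grad) Cf) :
  in_conv m a xx -> in_conv m a ss -> in_conv m a vv -> 0 < gam <= 1 ->
  f (vadd xx (vscal gam (vsub ss vv))) - f xx - gam * ip d (grad xx) (vsub ss vv) <= gam ^ 2 * Cf / 2.
Proof. intros Hx Hs Hv Hg. destruct HCf as [Hub _].
  set (D := f (vadd xx (vscal gam (vsub ss vv))) - f xx - gam * ip d (grad xx) (vsub ss vv)).
  assert (2 / gam ^ 2 * D <= Cf).
  { apply Hub. exists xx, ss, vv, gam. repeat split; auto; lra. }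
  assert (D = gam ^ 2 / 2 * (2 / gam ^ 2 * D)) by (field; lra).
  assert (0 < gam ^ 2) by (apply pow_lt; lra). nra. Qed.

Lemma Cf_ge0 d m a f grad Cf (Hm : (0 < m)%nat)
  (HCf : is_lub (curv_set d m a f grad) Cf) : 0 <= Cf.
Proof. destruct HCf as [Hub _]. apply Hub. exists (a O), (a O), (a O), 1.
  repeat split; try apply conv_atom; auto; try lra.
  replace (vadd (a O) (vscal 1 (vsub (a O) (a O)))) with (a O)
    by (extensionality k; unfold vadd, vscal, vsub; ring).
  rewrite ip_vsub. field. Qed.

Lemma step_bound d m a f grad U Cf x alpha s v gamma t
  (HUmink : forall y, in_mink m a y -> U y) (Hconv : convex_on U f)
  (HCf : is_lub (curv_set d m a f grad) Cf)
  (Hrun : AFW_run d m a f grad x alpha s v gamma) :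
  is_drop d a grad x alpha s v gamma t = false ->
  forall gam, 0 <= gam <= 1 ->
  f (x (S t)) <= f (x t) - gam * (- ip d (grad (x t)) (dirn d a grad x s v t)) + gam ^ 2 * Cf / 2.
Proof. intros Ed gam Hgam. pose proof (inv_all _ _ _ _ _ _ _ _ _ _ Hrun t) as HI.
  pose proof (line_opt _ _ _ _ _ _ _ _ _ _ _ t HUmink Hconv Hrun Ed gam Hgam) as HL.
  destruct Hgam as [[Hg0|Hg0] Hgl1].
  - run_at Hrun t. unfold dirn in *. destruct (is_fw d a grad x s v t).
    + pose proof (curv_bound d m a f grad Cf (x t) (a (s t)) (x t) gam HCf
        (inv_D _ _ _ _ _ HI) (conv_atom _ _ _ Hs1) (inv_D _ _ _ _ _ HI) ltac:(lra)). lra.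
    + pose proof (curv_bound d m a f grad Cf (x t) (x t) (a (v t)) gam HCf
        (inv_D _ _ _ _ _ HI) (inv_D _ _ _ _ _ HI) (conv_atom _ _ _ Hv1) ltac:(lra)). lra.
  - subst gam. rewrite vadd_scal0 in HL. lra. Qed.

Lemma min_exists n (P : nat -> Prop) (c : nat -> R) :
  (exists i, (i < n)%nat /\ P i) ->
  exists i, (i < n)%nat /\ P i /\ forall j, (j < n)%nat -> P j -> c i <= c j.
Proof. induction n; intros [i [Hi HP]]; [lia|].
  destruct (classic (exists i, (i < n)%nat /\ P i)) as [Hex|Hno].
  - destruct (IHn Hex) as [i0 [Hi0 [HP0 Hmin]]].
    destruct (classic (P n /\ c n < c i0)) as [[HPn Hc]|Hn].
    + exists n. repeat split; auto. intros j Hj HPj.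
      destruct (Nat.eq_dec j n); [subst; lra|]. specialize (Hmin j ltac:(lia) HPj). lra.
    + exists i0. repeat split; auto. intros j Hj HPj.
      destruct (Nat.eq_dec j n); [subst|apply Hmin; auto; lia].
      apply Rnot_lt_le. intro. apply Hn. auto.
  - assert (i = n). { destruct (Nat.eq_dec i n); auto. exfalso. apply Hno. exists i. split; auto. lia. }
    subst. exists n. repeat split; auto. intros j Hj HPj.
    destruct (Nat.eq_dec j n); [subst; lra|]. exfalso. apply Hno. exists j. split; auto. lia. Qed.

Lemma inv_ge0 z : 0 <= z -> 0 <= / z.
Proof. intros H. destruct (Req_dec z 0) as [->|]. rewrite Rinv_0; lra.
  left. apply Rinv_0_lt_compat. lra. Qed.

Lemma Sx_ip_le d m a g x S vv : in_Sx m a x S -> is_vS d a g S vv -> ip d g x <= ip d g vv.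
Proof. intros [HS [lam [Hl1 [Hl2 ->]]]] [iv [Hiv [-> Hmax]]].
  apply lam_ip_le.
  - intros i Hi. destruct (Hl1 i Hi). destruct (S i) eqn:E. left; auto. right; symmetry; auto.
  - auto.
  - intros i Hi Hp. apply Hmax. destruct (S i) eqn:E; auto. destruct (Hl1 i Hi). rewrite H0 in Hp; auto. lra. Qed.

Lemma sf_ip_le d m a g xs sv : in_conv m a xs -> is_sf d m a g sv -> ip d g sv <= ip d g xs.
Proof. intros Hxs [i [Hi [-> Hmin]]]. apply conv_ip_ge with m a; auto. Qed.

Definition suppS m (alpha : nat -> nat -> R) t := fun i =>
  andb (Nat.ltb i m) (if Rlt_dec 0 (alpha t i) then true else false).

Lemma suppS_Sx d m a f grad x alpha s v gamma t
  (Hrun : AFW_run d m a f grad x alpha s v gamma) :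
  in_Sx m a (x t) (suppS m alpha t) /\ is_vS d a (grad (x t)) (suppS m alpha t) (a (v t)).
Proof. pose proof (inv_all _ _ _ _ _ _ _ _ _ _ Hrun t) as [H0 [H1 [H2 H3]]]. run_at Hrun t.
  unfold suppS. split.
  - split.
    + intros i E. apply andb_prop in E as [E _]. apply Nat.ltb_lt; auto.
    + exists (alpha t). repeat split; auto.
      * intros E. apply andb_prop in E as [_ E]. destruct (Rlt_dec 0 _); auto; discriminate.
      * intros E. apply Nat.ltb_lt in H. rewrite H in E. simpl in E.
        destruct (Rlt_dec 0 _); try discriminate. pose proof (H1 i ltac:(apply Nat.ltb_lt; auto)). lra.
  - exists (v t). repeat split.
    + apply Nat.ltb_lt in Hv1. rewrite Hv1. destruct (Rlt_dec 0 _); auto.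
    + intros j E. apply andb_prop in E as [Ej E]. apply Nat.ltb_lt in Ej. apply Hv3; auto.
      destruct (Rlt_dec 0 _); auto; discriminate. Qed.

Lemma vf_exists d m a f grad x alpha s v gamma t
  (Hrun : AFW_run d m a f grad x alpha s v gamma) :
  exists vv, is_vf d m a (x t) (grad (x t)) vv /\
    ip d (grad (x t)) vv <= ip d (grad (x t)) (a (v t)).
Proof. destruct (suppS_Sx _ _ _ _ _ _ _ _ _ _ t Hrun) as [HS HvS]. run_at Hrun t.
  set (g := grad (x t)) in *.
  set (P := fun i => exists S, in_Sx m a (x t) S /\ is_vS d a g S (a i)).
  destruct (min_exists m P (fun i => ip d g (a i))) as [i0 [Hi0 [[S0 [HS0 HvS0]] Hmin]]].
  { exists (v t). split; auto. exists (suppS m alpha t). auto. }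
  assert (Hvf : is_vf d m a (x t) g (a i0)).
  { exists S0. split; [auto|split; [auto|]]. intros S' w HS' [j [Hj [-> Hjm]]].
    apply Hmin. apply (proj1 HS'); auto. exists S'. split; auto. exists j. auto. }
  exists (a i0). split; auto.
  destruct Hvf as [_ [_ [_ Hm']]]. apply Hm' with (suppS m alpha t); auto. Qed.

Lemma mu_ge0 d m a f grad U mu
  (Ha : forall i, (i < m)%nat -> in_Rd d (a i))
  (HUmink : forall y, in_mink m a y -> U y)
  (Hgrad : forall y, U y -> has_grad d f y (grad y))
  (Hconv : convex_on U f) :
  is_inf (mu_set d m a f grad) mu -> 0 <= mu.
Proof. intros [_ H]. apply H. intros r [x0 [xs [sv [vv [Hx [Hxs [_ [_ [_ ->]]]]]]]]].
  apply Rmult_le_pos. apply Rmult_le_pos. lra. apply inv_ge0. apply pow2_ge_0.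
  pose proof (first_order d m a f grad U x0 xs Ha HUmink Hgrad Hconv Hx Hxs). lra. Qed.

Lemma mu_le_Cf d m a f grad Cf mu
  (HCf : is_lub (curv_set d m a f grad) Cf) :
  is_inf (mu_set d m a f grad) mu -> mu <= Cf.
Proof. intros [Hlb Hglb].
  destruct (classic (exists r, mu_set d m a f grad r)) as [[r Hr]|Hno].
  2:{ exfalso. assert (mu + 1 <= mu). apply Hglb. intros r Hr. exfalso. apply Hno. eauto. lra. }
  destruct Hr as [x0 [xs [sv [vv [Hx [Hxs [Hneg [Hsf [Hvf _]]]]]]]]].
  set (g := grad x0) in *.
  pose proof Hvf as [S [HS [HvS _]]].
  assert (B1 := Sx_ip_le _ _ _ _ _ _ _ HS HvS).
  assert (B2 := sf_ip_le _ _ _ _ _ _ Hxs Hsf).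
  rewrite ip_vsub in Hneg.
  assert (HB : ip d g (vsub sv vv) < 0) by (rewrite ip_vsub; lra).
  pose proof Hsf as [is_ [His [Hsv _]]].
  destruct HvS as [iv [Hivt [Hvv _]]].
  destruct HS as [HSm [lam [Hl1 [Hl2 Hl3]]]].
  assert (Hiv : (iv < m)%nat) by auto.
  assert (Hlampos : 0 < lam iv) by (apply (Hl1 iv Hiv); auto).
  assert (Hlam0 : forall i, (i < m)%nat -> 0 <= lam i).
  { intros i Hi. destruct (Hl1 i Hi). destruct (S i). left; auto. right; symmetry; auto. }
  set (gam := Rmin 1 (lam iv)).
  assert (Hg : 0 < gam <= 1) by (unfold gam; split; [apply Rmin_glb_lt; lra|apply Rmin_l]).
  assert (Hg2 : gam <= lam iv) by apply Rmin_r.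
  set (xs' := vadd x0 (vscal gam (vsub sv vv))).
  assert (Hxs' : in_conv m a xs').
  { exists (fun i => lam i + gam * (if Nat.eqb i is_ then 1 else 0) - gam * (if Nat.eqb i iv then 1 else 0)).
    repeat split.
    - intros i Hi. pose proof (Hlam0 i Hi).
      destruct (Nat.eqb_spec i is_); destruct (Nat.eqb_spec i iv); subst; lra.
    - rewrite sumR_minus, sumR_plus, !sumR_scal, Hl2.
      rewrite (sumR_one m is_ (fun _ => 1) His), (sumR_one m iv (fun _ => 1) Hiv). ring.
    - unfold xs'. rewrite Hl3, Hsv, Hvv. extensionality k. unfold vadd, vscal, vsub, lincomb.
      rewrite (sumR_ext m (fun i => (lam i + gam * (if Nat.eqb i is_ then 1 else 0) - gam * (if Nat.eqb i iv then 1 else 0)) * a i k) (fun i => lam i * a i k + gam * ((if Nat.eqb i is_ then 1 else 0) * a i k)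
          - gam * ((if Nat.eqb i iv then 1 else 0) * a i k))) by (intros; ring).
      rewrite sumR_minus, sumR_plus, !sumR_scal.
      rewrite (sumR_ind m is_ (fun i => a i k) His), (sumR_ind m iv (fun i => a i k) Hiv). ring. }
  assert (Hd : vsub xs' x0 = vscal gam (vsub sv vv))
    by (unfold xs'; extensionality k; unfold vsub, vadd, vscal; ring).
  assert (Hsvc : in_conv m a sv) by (rewrite Hsv; apply conv_atom; auto).
  assert (Hvvc : in_conv m a vv) by (rewrite Hvv; apply conv_atom; auto).
  assert (E1 : mu <= 2 / gam ^ 2 * (f xs' - f x0 - gam * ip d g (vsub sv vv))).
  { apply Hlb. exists x0, xs', sv, vv. split; [auto|split; [auto|split; [|split; [|split]]]].
    - fold g. rewrite Hd, ip_vscal. nra.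
    - auto.
    - auto.
    - fold g. rewrite Hd, ip_vscal. cbv zeta. replace (- (gam * ip d g (vsub sv vv)) / - ip d g (vsub sv vv)) with gam by (field; lra). auto. }
  assert (E2 : 2 / gam ^ 2 * (f xs' - f x0 - gam * ip d g (vsub sv vv)) <= Cf).
  { destruct HCf as [Hub _]. apply Hub. exists x0, sv, vv, gam. repeat split; auto; lra. }
  lra. Qed.

Lemma G_facts d m a f grad x alpha s v gamma t (Hrun : AFW_run d m a f grad x alpha s v gamma) :
  - ip d (grad (x t)) (vsub (a (s t)) (x t)) <= - ip d (grad (x t)) (dirn d a grad x s v t) /\
  - ip d (grad (x t)) (vsub (x t) (a (v t))) <= - ip d (grad (x t)) (dirn d a grad x s v t).
Proof. unfold dirn, is_fw. destruct (Rge_dec _ _); lra. Qed.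

Lemma gF_ge_h d m a f grad U x alpha s v gamma t fmin xs
  (Ha : forall i, (i < m)%nat -> in_Rd d (a i))
  (HUmink : forall y, in_mink m a y -> U y)
  (Hgrad : forall y, U y -> has_grad d f y (grad y))
  (Hconv : convex_on U f)
  (Hrun : AFW_run d m a f grad x alpha s v gamma)
  (Hxs : in_conv m a xs) (Hfxs : f xs = fmin) :
  f (x t) - fmin <= - ip d (grad (x t)) (vsub (a (s t)) (x t)).
Proof. pose proof (inv_D _ _ _ _ _ (inv_all _ _ _ _ _ _ _ _ _ _ Hrun t)) as HxD.
  pose proof (first_order d m a f grad U (x t) xs Ha HUmink Hgrad Hconv HxD Hxs).
  run_at Hrun t.
  assert (ip d (grad (x t)) (a (s t)) <= ip d (grad (x t)) xs) by (apply conv_ip_ge with m a; auto).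
  rewrite ip_vsub in *. lra. Qed.

Lemma alg1 mu A B G h : 0 <= mu -> 0 < A -> A <= B -> mu * A ^ 2 <= 2 * B ^ 2 * (A - h) ->
  B <= 2 * G -> mu * h <= 2 * G ^ 2.
Proof. intros H1 H2 H3 H4 H5.
  assert (HB : 0 < B) by lra.
  assert (H6' : mu * (mu * A ^ 2) <= mu * (2 * B ^ 2 * (A - h))) by (apply Rmult_le_compat_l; auto).
  assert (H6 : 2 * B ^ 2 * (mu * h) <= 2 * B ^ 2 * (mu * A) - (mu * A) ^ 2) by nra.
  assert (H7' : 0 <= (B ^ 2 - mu * A) ^ 2) by apply pow2_ge_0.
  assert (H7 : 2 * B ^ 2 * (mu * A) - (mu * A) ^ 2 <= B ^ 4) by nra.
  assert (H8 : 2 * B ^ 2 * (mu * h) <= 2 * B ^ 2 * (B ^ 2 / 2)).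
  { replace (2 * B ^ 2 * (B ^ 2 / 2)) with (B ^ 4) by field. lra. }
  assert (H9 : mu * h <= B ^ 2 / 2).
  { apply Rmult_le_reg_l with (2 * B ^ 2); auto. nra. }
  nra. Qed.

Lemma mu_key d m a f grad U x alpha s v gamma fmin xs mu t
  (Ha : forall i, (i < m)%nat -> in_Rd d (a i))
  (HUmink : forall y, in_mink m a y -> U y)
  (Hgrad : forall y, U y -> has_grad d f y (grad y))
  (Hconv : convex_on U f)
  (Hrun : AFW_run d m a f grad x alpha s v gamma)
  (Hxs : in_conv m a xs) (Hfxs : f xs = fmin)
  (Hinf : is_inf (mu_set d m a f grad) mu) :
  ip d (grad (x t)) (vsub xs (x t)) < 0 ->
  mu * (f (x t) - fmin) <= 2 * (- ip d (grad (x t)) (dirn d a grad x s v t)) ^ 2.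
Proof. intros Hneg.
  pose proof (inv_D _ _ _ _ _ (inv_all _ _ _ _ _ _ _ _ _ _ Hrun t)) as HxD.
  pose proof (mu_ge0 d m a f grad U mu Ha HUmink Hgrad Hconv Hinf) as Hmu0.
  destruct (vf_exists _ _ _ _ _ _ _ _ _ _ t Hrun) as [vv [Hvf Hvvle]].
  pose proof (G_facts _ _ _ _ _ _ _ _ _ _ t Hrun) as [G1 G2].
  run_at Hrun t.
  set (g := grad (x t)) in *.
  assert (Hsf : is_sf d m a g (a (s t))) by (exists (s t); auto).
  pose proof Hvf as [S [HS [HvS _]]].
  assert (B1 := Sx_ip_le _ _ _ _ _ _ _ HS HvS).
  assert (B2 := sf_ip_le _ _ _ _ _ _ Hxs Hsf).
  set (A := - ip d g (vsub xs (x t))).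
  set (B := - ip d g (vsub (a (s t)) vv)).
  assert (HAB : A <= B) by (unfold A, B; rewrite !ip_vsub; lra).
  assert (HA : 0 < A) by (unfold A; lra).
  assert (HBG : B <= 2 * (- ip d g (dirn d a grad x s v t))).
  { unfold B. rewrite ip_vsub in *. lra. }
  assert (Hr : mu <= 2 / (A / B) ^ 2 * (f xs - f (x t) - ip d g (vsub xs (x t)))).
  { apply (proj1 Hinf). exists (x t), xs, (a (s t)), vv. repeat (split; auto). }
  apply alg1 with A B; auto.
  assert (E : 2 / (A / B) ^ 2 = 2 * B ^ 2 / A ^ 2) by (field; lra).
  rewrite E in Hr.
  assert (EA : ip d g (vsub xs (x t)) = - A) by (unfold A; ring). rewrite EA in Hr.
  replace (f xs - f (x t) - - A) with (f xs - f (x t) + A) in Hr by ring.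
  rewrite <- Hfxs.
  assert (0 < A ^ 2) by (apply pow_lt; lra).
  assert (mu * A ^ 2 <= (2 * B ^ 2 / A ^ 2 * (f xs - f (x t) + A)) * A ^ 2) by
    (apply Rmult_le_compat_r; lra).
  replace (2 * B ^ 2 / A ^ 2 * (f xs - f (x t) + A) * A ^ 2) with (2 * B ^ 2 * (A - (f (x t) - f xs))) in H0
    by (field; lra). auto. Qed.

Lemma contraction d m a f grad U Cf fmin x alpha s v gamma mu xs t
  (Hm : (0 < m)%nat)
  (Ha : forall i, (i < m)%nat -> in_Rd d (a i))
  (HUmink : forall y, in_mink m a y -> U y)
  (Hgrad : forall y, U y -> has_grad d f y (grad y))
  (Hconv : convex_on U f)
  (HCf : is_lub (curv_set d m a f grad) Cf)
  (Hmin2 : forall y, in_conv m a y -> fmin <= f y)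
  (Hrun : AFW_run d m a f grad x alpha s v gamma)
  (Hxs : in_conv m a xs) (Hfxs : f xs = fmin)
  (Hinf : is_inf (mu_set d m a f grad) mu) :
  is_drop d a grad x alpha s v gamma t = false ->
  f (x (S t)) - fmin <= (1 - mu / (4 * Cf)) * (f (x t) - fmin).
Proof. intros Ed.
  pose proof (inv_D _ _ _ _ _ (inv_all _ _ _ _ _ _ _ _ _ _ Hrun t)) as HxD.
  pose proof (Hmin2 _ HxD) as Hh0.
  pose proof (h_mono _ _ _ _ _ _ _ _ _ _ t Hrun) as Hmono.
  pose proof (mu_ge0 d m a f grad U mu Ha HUmink Hgrad Hconv Hinf) as Hmu0.
  pose proof (mu_le_Cf d m a f grad Cf mu HCf Hinf) as HmuC.
  pose proof (Cf_ge0 d m a f grad Cf Hm HCf) as HC0.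
  pose proof (gF_ge_h d m a f grad U x alpha s v gamma t fmin xs Ha HUmink Hgrad Hconv Hrun Hxs Hfxs) as HgF.
  pose proof (G_facts _ _ _ _ _ _ _ _ _ _ t Hrun) as [G1 G2].
  pose proof (step_bound d m a f grad U Cf x alpha s v gamma t HUmink Hconv HCf Hrun Ed) as Hstep.
  set (G := - ip d (grad (x t)) (dirn d a grad x s v t)) in *.
  set (h := f (x t) - fmin) in *.
  destruct (Rlt_le_dec (ip d (grad (x t)) (vsub xs (x t))) 0) as [Hneg|Hpos].
  2:{ pose proof (first_order d m a f grad U (x t) xs Ha HUmink Hgrad Hconv HxD Hxs).
      assert (h = 0) by (unfold h; lra). rewrite H0. lra. }
  pose proof (mu_key d m a f grad U x alpha s v gamma fmin xs mu t Ha HUmink Hgrad Hconv Hrun Hxs Hfxs Hinf Hneg) as Hkey.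
  fold G h in Hkey.
  destruct HC0 as [HC0|HC0].
  2:{ subst Cf. assert (mu = 0) by lra. subst mu. unfold Rdiv. rewrite Rmult_0_l. unfold h. lra. }
  set (rho := mu / (4 * Cf)).
  assert (Hrho : rho * (4 * Cf) = mu) by (unfold rho; field; lra).
  assert (Hrho0 : 0 <= rho) by (unfold rho; apply Rmult_le_pos; auto; apply inv_ge0; lra).
  assert (Hrho1 : rho <= 1/4) by nra.
  destruct (Rle_lt_dec G Cf) as [HGC|HGC].
  - assert (HG0 : 0 <= G) by (unfold h in *; lra).
    specialize (Hstep (G / Cf)).
    assert (0 <= G / Cf <= 1).
    { split. apply Rmult_le_pos; auto. apply inv_ge0; lra.
      apply Rmult_le_reg_r with Cf; auto. replace (G / Cf * Cf) with G by (field; lra). lra. }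
    specialize (Hstep H).
    replace (f (x t) - G / Cf * G + (G / Cf) ^ 2 * Cf / 2) with (f (x t) - G ^ 2 / (2 * Cf)) in Hstep
      by (field; lra).
    assert (G ^ 2 / (2 * Cf) >= rho * h).
    { apply Rle_ge. apply Rmult_le_reg_r with (2 * Cf); [lra|].
      replace (G ^ 2 / (2 * Cf) * (2 * Cf)) with (G ^ 2) by (field; lra). nra. }
    unfold h in *. lra.
  - specialize (Hstep 1 ltac:(lra)). unfold h in *. nra. Qed.

Lemma exp_pow_INR r n : exp r ^ n = exp (INR n * r).
Proof. induction n; simpl. rewrite Rmult_0_l, exp_0; auto.
  rewrite IHn. rewrite <- exp_plus. f_equal. destruct n; simpl; ring. Qed.

Lemma alg_iv D Cf C' h h' : 4 <= D -> 0 <= Cf -> 2 * Cf <= C' -> 0 <= h -> h <= 4 * C' / D ->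
  h' <= (1 - 2 / D) * h + (2 / D) ^ 2 * Cf / 2 -> h' <= 4 * C' / (D + 1).
Proof. intros HD HC HC' Hh0 Hh Hh'.
  set (u := / D) in *. set (w := / (D + 1)).
  assert (Hu : D * u = 1) by (unfold u; field; lra).
  assert (Hw : (D + 1) * w = 1) by (unfold w; field; lra).
  assert (Hu0 : 0 < u) by (unfold u; apply Rinv_0_lt_compat; lra).
  assert (Hw0 : 0 < w) by (unfold w; apply Rinv_0_lt_compat; lra).
  unfold Rdiv in *. fold u in Hh, Hh'. fold w.
  assert (Hu4 : u <= 1/4) by nra.
  assert (Huw : u - w = u * w) by nra.
  assert (H1 : (1 - 2 * u) * h <= (1 - 2 * u) * (4 * C' * u)) by (apply Rmult_le_compat_l; lra).
  assert (H2 : (2 * u) ^ 2 * Cf * / 2 <= u * u * C') by nra.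
  assert (H3 : 4 * C' * u - 7 * C' * u * u <= 4 * C' * w).
  { assert (4 * w <= 7 * u) by nra. assert (0 <= C') by lra.
    assert (X : 0 <= u * (7 * u - 4 * w)) by (apply Rmult_le_pos; lra).
    assert (0 <= C' * (u * (7 * u - 4 * w))) by (apply Rmult_le_pos; lra). nra. }
  nra. Qed.

Lemma exp_le' x y : x <= y -> exp x <= exp y.
Proof. intros [H|H]. left; apply exp_increasing; auto. subst; lra. Qed.

Theorem theorem1 (d m : nat) (a : nat -> vec) (f : vec -> R) (grad : vec -> vec)
  (U : vec -> Prop) (Cf fmin : R)
  (x : nat -> vec) (alpha : nat -> nat -> R) (s v : nat -> nat) (gamma : nat -> R)
  (Hm : (0 < m)%nat)
  (Ha : forall i, (i < m)%nat -> in_Rd d (a i))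
  (Hinj : forall i j, (i < m)%nat -> (j < m)%nat -> a i = a j -> i = j)
  (HU : is_open d U)
  (HUmink : forall y, in_mink m a y -> U y)
  (Hgrad : forall y, U y -> has_grad d f y (grad y))
  (Hconv : convex_on U f)
  (HCf : is_lub (curv_set d m a f grad) Cf)
  (Hmin1 : exists xs, in_conv m a xs /\ f xs = fmin)
  (Hmin2 : forall y, in_conv m a y -> fmin <= f y)
  (Hrun : AFW_run d m a f grad x alpha s v gamma) :
  let h t := f (x t) - fmin in
  let good t := gamma t < gmax d a grad x alpha s v t in
  let ndrop t := countN t (is_drop d a grad x alpha s v gamma) in
  let k t := (t - ndrop t)%nat in
  (* (i), second half *)
  (forall t, h (S t) <= h t) /\
  (* (ii) *)
  (forall t, (2 * ndrop t <= t)%nat) /\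
  (* (i) first half and (iii), whenever mu_f^A is finite *)
  (forall mu, is_inf (mu_set d m a f grad) mu ->
     let rho := mu / (4 * Cf) in
     (forall t, good t -> h (S t) <= (1 - rho) * h t) /\
     (forall t, h t <= h O * exp (- (1/2) * rho * INR t))) /\
  (* (iv) *)
  (forall t, (t <= 2 * k t)%nat /\
     h t <= 4 * (2 * Cf + h O) / (INR (k t) + 4)).
Proof.
  cbv zeta.
  destruct Hmin1 as [xs [Hxs Hfxs]].
  assert (Hh0 : forall t, 0 <= f (x t) - fmin).
  { intros t. pose proof (Hmin2 _ (inv_D _ _ _ _ _ (inv_all _ _ _ _ _ _ _ _ _ _ Hrun t))). lra. }
  pose proof (drops_half _ _ _ _ _ _ _ _ _ _ Hrun) as Hdh.
  assert (Hmono : forall t, f (x (S t)) - fmin <= f (x t) - fmin).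
  { intros t. pose proof (h_mono _ _ _ _ _ _ _ _ _ _ t Hrun). lra. }
  set (P := is_drop d a grad x alpha s v gamma) in *.
  assert (HnS : forall t, countN (S t) P = (countN t P + (if P t then 1 else 0))%nat) by reflexivity.
  pose proof (Cf_ge0 d m a f grad Cf Hm HCf) as HC0.
  split; [|split; [|split]].
  - exact Hmono.
  - exact Hdh.
  - intros mu Hinf.
    pose proof (mu_ge0 d m a f grad U mu Ha HUmink Hgrad Hconv Hinf) as Hmu0.
    pose proof (mu_le_Cf d m a f grad Cf mu HCf Hinf) as HmuC.
    assert (Hcon : forall t, P t = false ->
      f (x (S t)) - fmin <= (1 - mu / (4 * Cf)) * (f (x t) - fmin)).
    { intros t Ed. apply (contraction d m a f grad U Cf fmin x alpha s v gamma mu xs t); auto. }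
    assert (Hrho : 0 <= mu / (4 * Cf) <= 1).
    { destruct HC0 as [HC0|HC0].
      - split. apply Rmult_le_pos; auto. apply inv_ge0; lra.
        apply Rmult_le_reg_r with (4 * Cf); [lra|]. replace (mu / (4 * Cf) * (4 * Cf)) with mu by (field; lra). lra.
      - subst Cf. assert (mu = 0) by lra. subst. unfold Rdiv. rewrite Rmult_0_l. lra. }
    set (rho := mu / (4 * Cf)) in *.
    split.
    + intros t Hgood. apply Hcon. destruct (P t) eqn:E; auto. unfold P in E.
      apply drop_iff in E as [_ E]. lra.
    + assert (Hpow : forall t, f (x t) - fmin <= (1 - rho) ^ (t - countN t P) * (f (x O) - fmin)).
      { induction t.
        - simpl. lra.
        - rewrite HnS. pose proof (Hdh t). destruct (P t) eqn:E.
          + replace (S t - (countN t P + 1))%nat with (t - countN t P)%nat by lia.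
            specialize (Hmono t). lra.
          + replace (S t - (countN t P + 0))%nat with (S (t - countN t P)) by lia.
            simpl. specialize (Hcon t E).
            assert ((1 - rho) * (f (x t) - fmin) <= (1 - rho) * ((1 - rho) ^ (t - countN t P) * (f (x 0%nat) - fmin)))
              by (apply Rmult_le_compat_l; lra). lra. }
      intros t. specialize (Hpow t).
      set (kk := (t - countN t P)%nat) in *.
      assert (Hk2 : (t <= 2 * kk)%nat) by (unfold kk; specialize (Hdh t); lia).
      assert (Hb1 : (1 - rho) ^ kk <= exp (- rho) ^ kk).
      { apply pow_incr. split. lra. pose proof (exp_ineq1_le (- rho)). lra. }
      rewrite exp_pow_INR in Hb1.
      assert (Hb2 : exp (INR kk * - rho) <= exp (- (1 / 2) * rho * INR t)).
      { apply exp_le'. apply le_INR in Hk2. rewrite mult_INR in Hk2. simpl in Hk2.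
        assert (rho * INR t <= rho * (2 * INR kk)) by (apply Rmult_le_compat_l; lra). lra. }
      specialize (Hh0 O).
      assert ((1 - rho) ^ kk * (f (x 0%nat) - fmin) <= exp (- (1 / 2) * rho * INR t) * (f (x 0%nat) - fmin))
        by (apply Rmult_le_compat_r; lra).
      lra.
  - intros t. split.
    + specialize (Hdh t). lia.
    + induction t.
      * simpl. specialize (Hh0 O). lra.
      * rewrite HnS. pose proof (Hdh t). destruct (P t) eqn:E.
        -- replace (S t - (countN t P + 1))%nat with (t - countN t P)%nat by lia.
           specialize (Hmono t). lra.
        -- replace (S t - (countN t P + 0))%nat with (S (t - countN t P)) by lia.
           rewrite S_INR.
           set (K := INR (t - countN t P)) in *.
           assert (HK : 0 <= K) by apply pos_INR.
           replace (K + 1 + 4) with ((K + 4) + 1) by ring.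
           apply (alg_iv (K + 4) Cf (2 * Cf + (f (x 0%nat) - fmin)) (f (x t) - fmin)); auto; try lra.
           { specialize (Hh0 O). lra. }
           pose proof (gF_ge_h d m a f grad U x alpha s v gamma t fmin xs Ha HUmink Hgrad Hconv Hrun Hxs Hfxs) as HgF.
           pose proof (G_facts _ _ _ _ _ _ _ _ _ _ t Hrun) as [G1 G2].
           assert (Hg : 0 <= 2 / (K + 4) <= 1).
           { split. apply Rmult_le_pos; try lra. apply inv_ge0; lra.
             apply Rmult_le_reg_r with (K + 4); [lra|].
             replace (2 / (K + 4) * (K + 4)) with 2 by (field; lra). lra. }
           pose proof (step_bound d m a f grad U Cf x alpha s v gamma t HUmink Hconv HCf Hrun E _ Hg) as Hst.
           set (G := - ip d (grad (x t)) (dirn d a grad x s v t)) in *.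
           assert (2 / (K + 4) * (f (x t) - fmin) <= 2 / (K + 4) * G) by (apply Rmult_le_compat_l; lra).
           lra.
Qed.
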